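(* Let $0<r<s<\infty$, $\alpha>0$, $\beta>0$. For $n\ge3$ let $h_*=h_*(n)>0$ solve $\frac{2\alpha}{h_*^r}+\frac{2\beta}{h_*^s}=\log n-(\log\log n)^2$ and let $h_+=h_+(n)>0$ solve $\frac{2\alpha}{h_+^r}+\frac{2\beta}{h_+^s}=\log n+(\log\log n)^2$. Then $h_+(n)=(\log n/(2\beta))^{-1/s}(1+o(1))$, and for all $a\in\mathbb{R}$, $b\in\mathbb{R}$, as $n\to\infty$, $$h_+^a\exp\Big(-\frac{2\alpha}{h_+^r}\Big)=h_*^a\exp\Big(-\frac{2\alpha}{h_*^r}\Big)(1+o(1)),\qquad(\log n)^b\,n\exp\Big(-\frac{2\alpha}{h_+^r}-\frac{2\beta}{h_+^s}\Big)=o(1).$$ *)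

(* Defs.v *)
From Stdlib Require Export Reals.
From Coquelicot Require Export Coquelicot.
Open Scope R_scope.

Definition Phi (r s alpha beta h : R) : R :=
  2 * alpha / Rpower h r + 2 * beta / Rpower h s.

(* Main.v *)
Require Import Defs.
From Stdlib Require Import Reals.
From Coquelicot Require Import Coquelicot.
From Stdlib Require Import Lra Psatz.
Open Scope R_scope.

Lemma ln_pos_gt1 x : 0 < ln x -> 1 < x.
Proof.
  intros H. destruct (Rle_or_lt x 0) as [Hx|Hx].
  - unfold ln in H. destruct (Rlt_dec 0 x); lra.
  - destruct (Rle_or_lt x 1) as [H1|H1]; auto.
    assert (ln x <= ln 1) by (apply ln_le; lra). rewrite ln_1 in H0; lra.
Qed.

Lemma exp_le_mono x y : x <= y -> exp x <= exp y.
Proof. intros [H|H]. left; apply exp_increasing; auto. subst; lra. Qed.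

Lemma exp_gt z : z < exp z.
Proof. pose proof (exp_ineq1_le z); lra. Qed.

Lemma exp_neg_le z : 0 < z -> exp (- z) <= / z.
Proof.
  intros Hz. rewrite exp_Ropp. left. apply Rinv_lt_contravar.
  apply Rmult_lt_0_compat; auto; apply exp_pos. apply exp_gt.
Qed.

Lemma cube_exp z : 0 < z -> z ^ 3 <= 27 * exp z.
Proof.
  intros Hz. assert (He : exp z = exp (z/3) * exp (z/3) * exp (z/3)).
  { rewrite <- !exp_plus. f_equal. field. }
  pose proof (exp_gt (z/3)). rewrite He.
  assert (0 < z/3) by lra.
  assert ((z/3)^3 <= exp (z/3) ^3) by (apply pow_incr; lra).
  simpl in *. nra.
Qed.

Lemma poly_exp d y : 0 < d -> 0 < y -> y ^ 2 * exp (- (d * y)) <= 27 / (d ^ 3 * y).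
Proof.
  intros Hd Hy. pose proof (cube_exp (d*y) ltac:(nra)) as C.
  rewrite exp_Ropp. set (E := exp (d*y)) in *.
  assert (HE : 0 < E) by apply exp_pos.
  assert (Hdy : 0 < d^3*y) by (apply Rmult_lt_0_compat; auto; apply pow_lt; auto).
  apply (Rmult_le_reg_r (E * (d^3*y))). nra.
  replace (y ^ 2 * / E * (E * (d ^ 3 * y))) with ((d*y)^3) by (field; lra).
  replace (27 / (d ^ 3 * y) * (E * (d ^ 3 * y))) with (27 * E) by (field; lra).
  exact C.
Qed.

Lemma lim_inv_y (y : nat -> R) a K :
  is_lim_seq y p_infty -> is_lim_seq (fun n => a + K / y n) a.
Proof.
  intros Hy.
  pose proof (is_lim_seq_inv _ _ Hy ltac:(discriminate)) as H1.
  pose proof (is_lim_seq_scal_l _ K _ H1) as H2.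
  pose proof (is_lim_seq_plus' _ _ a (K*0) (is_lim_seq_const a) H2) as H3.
  replace (a + K * 0) with a in H3 by ring. exact H3.
Qed.

Lemma ev_gt (y : nat -> R) M : is_lim_seq y p_infty -> eventually (fun n => M < y n).
Proof.
  intros Hy. apply (Hy (fun x => M < x)). exists M. auto.
Qed.

Lemma exp_le_inv x y : exp x <= exp y -> x <= y.
Proof. intros H. destruct (Rle_or_lt x y); auto. pose proof (exp_increasing _ _ H0); lra. Qed.

Lemma qb r s alpha beta y t d :
  0 < r -> r < s -> 0 < alpha -> 0 < beta -> 0 < y ->
  2 * alpha * exp (- (r * t)) + 2 * beta * exp (- (s * t)) = exp y + d -> d <= exp y ->
  2 * alpha * exp (- (r * t)) / exp y <=
  (2 * alpha * exp (- (r / s * ln beta)) / ((s - r) / s)) / y.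
Proof.
  intros Hr Hrs Ha Hb Hy Heq Hd.
  pose proof (exp_pos (- (r * t))). pose proof (exp_pos y).
  assert (H1 : exp (- (s * t)) <= exp (y - ln beta)).
  { unfold Rminus. rewrite exp_plus, (exp_Ropp (ln beta)), exp_ln by lra.
    apply (Rmult_le_reg_l (2*beta)). lra.
    replace (2 * beta * (exp y * / beta)) with (2 * exp y) by (field; lra). nra. }
  apply exp_le_inv in H1.
  assert (H2 : - (r * t) <= r / s * (y - ln beta)).
  { replace (- (r * t)) with (r / s * (- (s * t))) by (field; lra).
    apply Rmult_le_compat_l; auto. left; apply Rdiv_lt_0_compat; lra. }
  assert (H3 : exp (- (r * t)) / exp y <= exp (- (r / s * ln beta)) * exp (- ((s - r) / s * y))).
  { unfold Rdiv at 1. rewrite <- exp_Ropp, <- !exp_plus. apply exp_le_mono.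
    replace (- (r / s * ln beta) + - ((s - r) / s * y)) with (r / s * (y - ln beta) - y)
      by (field; lra). lra. }
  pose proof (exp_neg_le ((s - r) / s * y)) as H4.
  assert (Hd' : 0 < (s - r) / s) by (apply Rdiv_lt_0_compat; lra).
  assert (0 < (s - r) / s * y) by nra.
  specialize (H4 H5).
  pose proof (exp_pos (- (r / s * ln beta))).
  replace ((2 * alpha * exp (- (r / s * ln beta)) / ((s - r) / s)) / y)
    with (2 * alpha * (exp (- (r / s * ln beta)) * / ((s - r) / s * y))) by (field; lra).
  replace (2 * alpha * exp (- (r * t)) / exp y) with (2 * alpha * (exp (- (r * t)) / exp y)) by (field; lra).
  apply Rmult_le_compat_l. lra.
  eapply Rle_trans. apply H3. apply Rmult_le_compat_l; lra.
Qed.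

Definition Kq r s alpha beta := 2 * alpha * exp (- (r / s * ln beta)) / ((s - r) / s).

Lemma Kq_pos r s alpha beta : 0 < r -> r < s -> 0 < alpha -> 0 < Kq r s alpha beta.
Proof.
  intros. unfold Kq. apply Rdiv_lt_0_compat. pose proof (exp_pos (- (r / s * ln beta))). nra.
  apply Rdiv_lt_0_compat; lra.
Qed.

Lemma y2L y : 0 < y -> 0 <= y ^ 2 / exp y <= 27 / y.
Proof.
  intros Hy. pose proof (poly_exp 1 y Rlt_0_1 Hy). pose proof (exp_pos y).
  split. apply Rdiv_le_0_compat; nra.
  unfold Rdiv. rewrite <- exp_Ropp. replace (- y) with (- (1 * y)) by ring.
  replace (27 * / y) with (27 / (1 ^ 3 * y)) by (field; lra). auto.
Qed.

Lemma P1 r s alpha beta y t :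
  0 < r -> r < s -> 0 < alpha -> 0 < beta -> 27 <= y ->
  2 * alpha * exp (- (r * t)) + 2 * beta * exp (- (s * t)) = exp y + y ^ 2 ->
  1 - Kq r s alpha beta / y <= 2 * beta * exp (- (s * t)) / exp y <= 1 + 27 / y.
Proof.
  intros Hr Hrs Ha Hb Hy Heq.
  pose proof (y2L y ltac:(lra)) as [A B]. pose proof (exp_pos y).
  assert (y ^ 2 <= exp y).
  { assert (y ^ 2 / exp y <= 1). eapply Rle_trans. apply B.
    apply (Rmult_le_reg_r y). lra. unfold Rdiv; rewrite Rmult_assoc, Rinv_l; lra.
    apply (Rmult_le_reg_r (/ exp y)). apply Rinv_0_lt_compat; lra.
    rewrite Rinv_r by lra. exact H0. }
  pose proof (qb r s alpha beta y t (y^2) Hr Hrs Ha Hb ltac:(lra) Heq H0) as Q.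
  fold (Kq r s alpha beta) in Q.
  pose proof (exp_pos (- (r * t))).
  assert (E : 2 * beta * exp (- (s * t)) / exp y =
     1 + y ^ 2 / exp y - 2 * alpha * exp (- (r * t)) / exp y).
  { replace (2 * beta * exp (- (s * t))) with (exp y + y ^ 2 - 2 * alpha * exp (- (r * t))) by lra.
    field; lra. }
  rewrite E. assert (0 <= 2 * alpha * exp (- (r * t)) / exp y).
  { apply Rdiv_le_0_compat; nra. }
  lra.
Qed.

Definition K2 r s alpha beta a :=
  Rabs a * 108 / s + 2 * alpha * exp ((s - r) / s * ln (4 * beta)) / beta * 27 / ((s - r) / s) ^ 3.

Lemma P2 r s alpha beta a y tp ts :
  0 < r -> r < s -> 0 < alpha -> 0 < beta -> 0 < y -> 2 * (27 + Kq r s alpha beta) <= y ->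
  2 * alpha * exp (- (r * tp)) + 2 * beta * exp (- (s * tp)) = exp y + y ^ 2 ->
  2 * alpha * exp (- (r * ts)) + 2 * beta * exp (- (s * ts)) = exp y - y ^ 2 ->
  Rabs (a * (tp - ts) + 2 * alpha * (exp (- (r * ts)) - exp (- (r * tp)))) <= K2 r s alpha beta a / y.
Proof.
  intros Hr Hrs Ha Hb Hy HyK Ep Es.
  pose proof (y2L y Hy) as [A B]. pose proof (exp_pos y) as HL.
  pose proof (Kq_pos r s alpha beta Hr Hrs Ha) as HK.
  set (L := exp y) in *. set (K := Kq r s alpha beta) in *.
  assert (Hy2 : - y ^ 2 <= L) by (pose proof (pow2_ge_0 y); lra).
  pose proof (qb r s alpha beta y ts (- y^2) Hr Hrs Ha Hb Hy ltac:(unfold L in Es; lra) Hy2) as Q.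
  fold (Kq r s alpha beta) in Q. fold K in Q. fold L in Q.
  set (Ws := exp (- (r * ts))) in *. set (Vs := exp (- (s * ts))) in *.
  set (Wp := exp (- (r * tp))) in *. set (Vp := exp (- (s * tp))) in *.
  assert (HWs : 0 < Ws) by apply exp_pos. assert (HVs : 0 < Vs) by apply exp_pos.
  assert (HWp : 0 < Wp) by apply exp_pos. assert (HVp : 0 < Vp) by apply exp_pos.
  assert (HV : L / (4 * beta) <= Vs).
  { assert (E : 2 * beta * Vs / L = 1 - y ^ 2 / L - 2 * alpha * Ws / L).
    { replace (2 * beta * Vs) with (L - y ^ 2 - 2 * alpha * Ws) by lra. field; lra. }
    assert (27 / y + K / y <= 1/2).
    { replace (27 / y + K / y) with ((27 + K) / y) by (field; lra).
      apply (Rmult_le_reg_r y). lra. unfold Rdiv; rewrite Rmult_assoc, Rinv_l; lra. }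
    assert (1/2 <= 2 * beta * Vs / L) by (idtac; lra).
    apply (Rmult_le_reg_r (4 * beta / L)). apply Rdiv_lt_0_compat; lra.
    replace (L / (4 * beta) * (4 * beta / L)) with 1 by (field; lra).
    replace (Vs * (4 * beta / L)) with (2 * (2 * beta * Vs / L)) by (field; lra). lra. }
  assert (Hts : tp <= ts).
  { destruct (Rle_or_lt tp ts) as [h|h]; auto. exfalso.
    assert (Wp < Ws) by (apply exp_increasing; nra).
    assert (Vp < Vs) by (apply exp_increasing; nra). nra. }
  set (D := ts - tp).
  assert (HD : 0 <= D) by (unfold D; lra).
  assert (EW : Wp = Ws * exp (r * D)).
  { unfold Wp, Ws, D. rewrite <- exp_plus. f_equal. ring. }
  assert (EV : Vp = Vs * exp (s * D)).
  { unfold Vp, Vs, D. rewrite <- exp_plus. f_equal. ring. }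
  assert (Er1 : 1 <= exp (r * D)).
  { rewrite <- exp_0. apply exp_le_mono. nra. }
  assert (Ers : exp (r * D) <= exp (s * D)) by (apply exp_le_mono; nra).
  assert (Es1 : s * D <= exp (s * D) - 1) by (pose proof (exp_ineq1_le (s * D)); lra).
  assert (Hdiff : beta * Vs * (exp (s * D) - 1) <= y ^ 2).
  { rewrite EW, EV in Ep.
    assert (0 <= alpha * Ws * (exp (r * D) - 1)).
    { apply Rmult_le_pos; [|lra]. apply Rmult_le_pos; lra. }
    lra. }
  assert (HDb : D <= 4 / s * (27 / y)).
  { assert (HVs4 : beta * Vs >= L / 4).
    { apply Rle_ge. apply (Rmult_le_reg_r (/ beta)). apply Rinv_0_lt_compat; lra.
      replace (beta * Vs * / beta) with Vs by (field; lra).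
      replace (L / 4 * / beta) with (L / (4 * beta)) by (field; lra). lra. }
    assert (s * D * (L / 4) <= y ^ 2) by nra.
    assert (D <= 4 / s * (y ^ 2 / L)).
    { apply (Rmult_le_reg_r (s * L / 4)). nra.
      replace (4 / s * (y ^ 2 / L) * (s * L / 4)) with (y ^ 2) by (field; lra). nra. }
    apply (Rle_trans _ _ _ H0). apply Rmult_le_compat_l. left; apply Rdiv_lt_0_compat; lra. lra. }
  set (del := (s - r) / s).
  assert (Hdel : 0 < del) by (apply Rdiv_lt_0_compat; lra).
  assert (HWV : Ws / Vs <= exp (del * ln (4 * beta)) * exp (- (del * y))).
  { assert (H1 : exp (y - ln (4 * beta)) <= Vs).
    { unfold Rminus. rewrite exp_plus, (exp_Ropp (ln (4*beta))), exp_ln by lra. exact HV. }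
    unfold Vs in H1. apply exp_le_inv in H1.
    unfold Ws, Vs, Rdiv. rewrite <- exp_Ropp, <- !exp_plus. apply exp_le_mono.
    replace (- (r * ts) + - - (s * ts)) with (del * (s * ts)) by (unfold del; field; lra).
    replace (del * ln (4 * beta) + - (del * y)) with (del * (ln (4 * beta) - y)) by ring.
    apply Rmult_le_compat_l. lra. lra. }
  assert (HW : Wp - Ws <= exp (del * ln (4 * beta)) / beta * (27 / (del ^ 3 * y))).
  { assert (Wp - Ws <= Ws * (exp (s * D) - 1)) by (rewrite EW; nra).
    assert (Ws * (exp (s * D) - 1) <= Ws / Vs * (y ^ 2 / beta)).
    { apply (Rmult_le_reg_r (Vs * beta)). nra.
      replace (Ws / Vs * (y ^ 2 / beta) * (Vs * beta)) with (Ws * y ^ 2) by (field; lra).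
      nra. }
    pose proof (poly_exp del y Hdel Hy).
    pose proof (exp_pos (del * ln (4 * beta))).
    pose proof (exp_pos (- (del * y))).
    assert (H5 : Ws / Vs * (y ^ 2 / beta) <= exp (del * ln (4 * beta)) * exp (- (del * y)) * (y ^ 2 / beta)).
    { apply Rmult_le_compat_r; auto. apply Rdiv_le_0_compat; nra. }
    replace (exp (del * ln (4 * beta)) * exp (- (del * y)) * (y ^ 2 / beta)) with
      (exp (del * ln (4 * beta)) / beta * (y ^ 2 * exp (- (del * y)))) in H5 by (field; lra).
    assert (exp (del * ln (4 * beta)) / beta * (y ^ 2 * exp (- (del * y))) <=
            exp (del * ln (4 * beta)) / beta * (27 / (del ^ 3 * y))).
    { apply Rmult_le_compat_l; auto. left; apply Rdiv_lt_0_compat; lra. }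
    lra. }
  assert (HW0 : 0 <= Wp - Ws) by (rewrite EW; nra).
  replace (tp - ts) with (- D) by (unfold D; ring).
  replace (Ws - Wp) with (- (Wp - Ws)) by ring.
  eapply Rle_trans. apply Rabs_triang.
  rewrite Rabs_mult, Rabs_Ropp, (Rabs_right D) by lra.
  rewrite Rabs_mult, Rabs_Ropp, (Rabs_right (Wp - Ws)) by lra.
  rewrite (Rabs_right (2 * alpha)) by lra.
  unfold K2. fold del.
  pose proof (Rabs_pos a).
  assert (Rabs a * D <= Rabs a * (4 / s * (27 / y))) by (apply Rmult_le_compat_l; auto).
  assert (2 * alpha * (Wp - Ws) <= 2 * alpha * (exp (del * ln (4 * beta)) / beta * (27 / (del ^ 3 * y))))
    by (apply Rmult_le_compat_l; lra).
  replace ((Rabs a * 108 / s + 2 * alpha * exp (del * ln (4 * beta)) / beta * 27 / del ^ 3) / y)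
    with (Rabs a * (4 / s * (27 / y)) + 2 * alpha * (exp (del * ln (4 * beta)) / beta * (27 / (del ^ 3 * y))))
    by (field; repeat split; try lra; apply pow_nonzero; lra).
  lra.
Qed.


Lemma Phi_t r s alpha beta h :
  Phi r s alpha beta h = 2 * alpha * exp (- (r * ln h)) + 2 * beta * exp (- (s * ln h)).
Proof. unfold Phi, Rpower, Rdiv. rewrite !exp_Ropp. ring. Qed.

Lemma expq A B C D : exp A * exp B / (exp C * exp D) = exp (A + B - C - D).
Proof.
  unfold Rminus. rewrite !exp_plus, !exp_Ropp. field.
  split; apply Rgt_not_eq; apply exp_pos.
Qed.

Lemma id1 s beta h L : 0 < s -> 0 < beta -> 0 < h -> 0 < L ->
  h / Rpower (L / (2 * beta)) (- (1 / s)) = exp (- (1 / s) * ln (2 * beta * exp (- (s * ln h)) / L)).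
Proof.
  intros Hs Hb Hh HL. unfold Rpower.
  assert (E1 : ln (2 * beta * exp (- (s * ln h)) / L) = ln (2 * beta) + - (s * ln h) - ln L).
  { rewrite ln_div, ln_mult, ln_exp; try lra. apply exp_pos.
    apply Rmult_lt_0_compat; [lra | apply exp_pos]. }
  assert (E2 : ln (L / (2 * beta)) = ln L - ln (2 * beta)) by (rewrite ln_div; lra).
  rewrite E1, E2.
  rewrite <- (exp_ln h) at 1 by lra. unfold Rdiv at 1. rewrite <- exp_Ropp, <- exp_plus.
  f_equal. field. lra.
Qed.

Lemma id2 r alpha a hp hs : 0 < hp -> 0 < hs ->
  Rpower hp a * exp (- (2 * alpha / Rpower hp r)) / (Rpower hs a * exp (- (2 * alpha / Rpower hs r)))
  = exp (a * (ln hp - ln hs) + 2 * alpha * (exp (- (r * ln hs)) - exp (- (r * ln hp)))).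
Proof.
  intros. unfold Rpower. rewrite expq. f_equal. unfold Rdiv. rewrite <- !exp_Ropp. ring.
Qed.

Lemma Hyinf : is_lim_seq (fun n => ln (ln (INR n))) p_infty.
Proof.
  eapply filterlim_comp; [eapply filterlim_comp; [apply is_lim_seq_INR | apply is_lim_ln_p] | apply is_lim_ln_p].
Qed.

Lemma base n : (3 <= n)%nat -> 0 < ln (ln (INR n)) ->
  ln (INR n) = exp (ln (ln (INR n))) /\ INR n = exp (ln (INR n)) /\ 1 < ln (INR n).
Proof.
  intros _ Hy. pose proof (ln_pos_gt1 _ Hy) as H1.
  assert (H2 : 1 < INR n) by (apply ln_pos_gt1; lra).
  split. rewrite exp_ln; lra. split. rewrite exp_ln; lra. lra.
Qed.

Theorem lemma9 (r s alpha beta : R)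
  (hr : 0 < r) (hrs : r < s) (halpha : 0 < alpha) (hbeta : 0 < beta)
  (hstar hplus : nat -> R)
  (hstar_pos : forall n : nat, (3 <= n)%nat -> 0 < hstar n)
  (hstar_eq : forall n : nat, (3 <= n)%nat ->
     Phi r s alpha beta (hstar n) = ln (INR n) - (ln (ln (INR n))) ^ 2)
  (hplus_pos : forall n : nat, (3 <= n)%nat -> 0 < hplus n)
  (hplus_eq : forall n : nat, (3 <= n)%nat ->
     Phi r s alpha beta (hplus n) = ln (INR n) + (ln (ln (INR n))) ^ 2) :
  is_lim_seq (fun n => hplus n / Rpower (ln (INR n) / (2 * beta)) (- (1 / s))) 1
  /\ (forall a : R,
        is_lim_seq (fun n =>
          (Rpower (hplus n) a * exp (- (2 * alpha / Rpower (hplus n) r)))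
          / (Rpower (hstar n) a * exp (- (2 * alpha / Rpower (hstar n) r)))) 1)
  /\ (forall b : R,
        is_lim_seq (fun n =>
          Rpower (ln (INR n)) b * INR n
          * exp (- (2 * alpha / Rpower (hplus n) r) - 2 * beta / Rpower (hplus n) s)) 0).
Proof.
  pose proof Hyinf as Hy.
  assert (H3 : eventually (fun n => (3 <= n)%nat)) by (exists 3%nat; auto).
  assert (Hs : 0 < s) by lra.
  split; [|split].
  -
    set (q := fun n => 2 * beta * exp (- (s * ln (hplus n))) / ln (INR n)).
    assert (Hq : is_lim_seq q 1).
    { apply (is_lim_seq_le_le_loc (fun n => 1 + (- Kq r s alpha beta) / ln (ln (INR n)))
               _ (fun n => 1 + 27 / ln (ln (INR n)))).
      2: apply lim_inv_y; auto. 2: apply lim_inv_y; auto.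
      generalize (filter_and _ _ H3 (ev_gt _ 27 Hy)). apply filter_imp.
      intros n [Hn Hyn]. destruct (base n Hn ltac:(lra)) as [EL [En HL]].
      set (y := ln (ln (INR n))) in *.
      pose proof (hplus_eq n Hn) as E. rewrite Phi_t, EL, ln_exp in E.
      pose proof (P1 r s alpha beta y (ln (hplus n)) hr hrs halpha hbeta ltac:(lra) E) as Hb.
      unfold q. rewrite EL. unfold Rdiv in *. lra. }
    pose proof (is_lim_seq_continuous (fun q => exp (- (1 / s) * ln q)) q 1) as C.
    cbv beta in C. rewrite ln_1, Rmult_0_r, exp_0 in C. apply (is_lim_seq_ext_loc (fun n => exp (- (1 / s) * ln (q n)))).
    + generalize (filter_and _ _ H3 (ev_gt _ 0 Hy)). apply filter_imp.
      intros n [Hn Hyn]. destruct (base n Hn Hyn) as [EL [En HL]].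
      unfold q. rewrite id1; auto; lra.
    + apply C; auto.
      change (continuity_pt (comp exp (mult_real_fct (- (1 / s)) ln)) 1).
      apply continuity_pt_comp.
      * apply continuity_pt_scal. apply derivable_continuous_pt.
        exists (/ 1). apply derivable_pt_lim_ln. lra.
      * apply derivable_continuous_pt, derivable_pt_exp.
  -
    intros a.
    set (E := fun n => a * (ln (hplus n) - ln (hstar n)) + 2 * alpha * (exp (- (r * ln (hstar n))) - exp (- (r * ln (hplus n))))).
    assert (HE : is_lim_seq E 0).
    { apply (is_lim_seq_le_le_loc (fun n => 0 + (- K2 r s alpha beta a) / ln (ln (INR n)))
               _ (fun n => 0 + K2 r s alpha beta a / ln (ln (INR n)))).
      2: apply lim_inv_y; auto. 2: apply lim_inv_y; auto.
      generalize (filter_and _ _ H3 (ev_gt _ (2 * (27 + Kq r s alpha beta)) Hy)). apply filter_imp.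
      intros n [Hn Hyn]. pose proof (Kq_pos r s alpha beta hr hrs halpha).
      destruct (base n Hn ltac:(lra)) as [EL [En HL]].
      set (y := ln (ln (INR n))) in *.
      pose proof (hplus_eq n Hn) as Ep. rewrite Phi_t, EL, ln_exp in Ep.
      pose proof (hstar_eq n Hn) as Es. rewrite Phi_t, EL, ln_exp in Es.
      pose proof (P2 r s alpha beta a y (ln (hplus n)) (ln (hstar n)) hr hrs halpha hbeta ltac:(lra) ltac:(lra) Ep Es) as Hb.
      apply Rabs_le_between in Hb. unfold E. unfold Rdiv in *. lra. }
    pose proof (is_lim_seq_continuous exp E 0 (derivable_continuous_pt _ _ (derivable_pt_exp 0)) HE) as C.
    rewrite exp_0 in C. apply (is_lim_seq_ext_loc (fun n => exp (E n))); auto.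
    generalize H3. apply filter_imp. intros n Hn. unfold E. rewrite id2; auto.
  -
    intros b.
    apply (is_lim_seq_le_le_loc (fun _ => 0) _ (fun n => 0 + 1 / ln (ln (INR n)))).
    2: apply is_lim_seq_const. 2: apply lim_inv_y; auto.
    generalize (filter_and _ _ H3 (ev_gt _ (Rmax 1 (b + 1)) Hy)). apply filter_imp.
    intros n [Hn Hyn]. pose proof (Rmax_l 1 (b+1)). pose proof (Rmax_r 1 (b+1)).
    destruct (base n Hn ltac:(lra)) as [EL [En HL]].
    assert (Hid : - (2 * alpha / Rpower (hplus n) r) - 2 * beta / Rpower (hplus n) s
                  = - Phi r s alpha beta (hplus n)) by (unfold Phi; ring).
    rewrite Hid, hplus_eq by auto.
    set (L := ln (INR n)) in *. set (y := ln L) in *.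
    unfold Rpower. fold y. rewrite En. rewrite <- !exp_plus.
    split. left; apply exp_pos.
    eapply Rle_trans. apply exp_le_mono.
    instantiate (1 := - y). nra.
    pose proof (exp_neg_le y ltac:(lra)). unfold Rdiv. lra.
Qed.
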